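(* Assume the Nemytskii operator $\mathcal G(\boldsymbol\zeta)=\mathbf g(\cdot,\boldsymbol\zeta(\cdot))$ maps $L_t^2(\Gamma)$ into itself with $\|\mathcal G(\boldsymbol\zeta_1)-\mathcal G(\boldsymbol\zeta_2)\|_{L^2(\Gamma)}\le L_g\|\boldsymbol\zeta_1-\boldsymbol\zeta_2\|_{L^2(\Gamma)}$ for all $\boldsymbol\zeta_1,\boldsymbol\zeta_2\in L_t^2(\Gamma)$. If $C_{\rm tr}L_g<1$, then there is a unique $\mathbf E\in\mathbf X(\Omega)$ with $\mathcal A^{\rm tr}(\mathbf E;\mathbf V)=\langle\mathbf F^{\rm tr},\mathbf V\rangle$ for all $\mathbf V\in\mathbf X(\Omega)$, where $$\mathcal A^{\rm tr}(\mathbf E;\mathbf V)=\int_\Omega\big[\mu_r^{-1}(\nabla\times\mathbf E)\cdot(\nabla\times\overline{\mathbf V})-k^2\varepsilon_r\mathbf E\cdot\overline{\mathbf V}\big]d\boldsymbol x-\int_\Gamma\mathbf g(\cdot,\gamma_T\mathbf E)\cdot\gamma_T\overline{\mathbf V}\,ds+ik\langle\Lambda\gamma_t\mathbf E,\gamma_T\overline{\mathbf V}\rangle_{\Gamma_R}.$$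
   Context: Let $k>0$, $\varepsilon_0,\mu_0>0$, $\omega>0$. Let $D\subset\mathbb R^3$ be a bounded Lipschitz domain, $\Gamma=\partial D$, $\mathbf n$ the unit normal pointing out of $D$. Let $B_R$ be an open ball with $\overline D\subset B_R$, $\Gamma_R=\partial B_R$, and $\Omega=B_R$. $\mu_r=\mu_D/\mu_0$ in $D$, $=1$ outside; $\varepsilon_r=\varepsilon_0^{-1}(\varepsilon_D+i\sigma_D/\omega)$ in $D$, $=1$ outside, with $\mu_D,\varepsilon_D>0,\sigma_D\ge0$. Incident field $\mathbf E^i=\mathbf p e^{ik\mathbf d\cdot\boldsymbol x}$, $\mathbf d\in\mathbb S^2$, $\mathbf p\cdot\mathbf d=0$. $\gamma_t\mathbf u=\mathbf n\times\mathbf u$, $\gamma_T\mathbf u=\mathbf n\times(\mathbf u\times\mathbf n)$. $\Lambda$ is the electromagnetic Calderón operator on $\Gamma_R$ ($\Lambda\boldsymbol\xi=\gamma_t((ik)^{-1}\nabla\times\mathbf W)$ with $\mathbf W$ radiating solution of $\nabla\times\nabla\times\mathbf W-k^2\mathbf W=0$ outside $\overline{B_R}$, $\gamma_t\mathbf W=\boldsymbol\xi$), and $\langle\cdot,\cdot\rangle_{\Gamma_R}$ the $H^{-1/2}(\operatorname{div}_{\Gamma_R})$–$H^{-1/2}(\operatorname{curl}_{\Gamma_R})$ duality. $L_t^2(\Gamma)$: tangential $L^2$ fields. $\mathbf X(\Omega)=\{\mathbf E\in H(\operatorname{curl};\Omega):\gamma_T\mathbf E|_\Gamma\in L_t^2(\Gamma)\}$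 (the common tangential trace on $\Gamma$), with norm $\|\mathbf E\|^2_{H(\operatorname{curl})}+\|\gamma_T\mathbf E\|^2_{L^2(\Gamma)}$. $\langle\mathbf F^{\rm tr},\mathbf V\rangle=\langle ik\Lambda(\gamma_t\mathbf E^i)-\gamma_t(\nabla\times\mathbf E^i),\gamma_T\overline{\mathbf V}\rangle_{\Gamma_R}$. $\mathbf g:\Gamma\times\mathbb C^3\to\mathbb C^3$ Carathéodory and tangential. Standing fact: with $\langle\mathscr A_l^{\rm tr}\mathbf E,\mathbf V\rangle=\int_\Omega[\mu_r^{-1}(\nabla\times\mathbf E)\cdot(\nabla\times\overline{\mathbf V})-k^2\varepsilon_r\mathbf E\cdot\overline{\mathbf V}]d\boldsymbol x+ik\langle\Lambda\gamma_t\mathbf E,\gamma_T\overline{\mathbf V}\rangle_{\Gamma_R}$, for every $\mathbf f\in L_t^2(\Gamma)$ the problem $\langle\mathscr A^{\rm tr}_l\mathbf E,\mathbf V\rangle=\langle\mathbf F^{\rm tr},\mathbf V\rangle+\int_\Gamma\mathbf f\cdot\gamma_T\overline{\mathbf V}ds$ $\forall\mathbf V\in\mathbf X(\Omega)$ has a unique solution in $\mathbf X(\Omega)$, and solutions for data $\mathbf f_1,\mathbf f_2$ satisfy $\|\mathbf E_1-\mathbf E_2\|_{\mathbf X(\Omega)}\le C_{\rm tr}\|\mathbf f_1-\mathbf f_2\|_{L^2(\Gamma)}$. *)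

(* Defs.v *)
From HB Require Import structures.
From mathcomp Require Import all_boot all_order all_algebra.
From mathcomp Require Import all_classical all_reals all_analysis.
From mathcomp.real_closed Require Import complex.
Import numFieldNormedType.Exports.
Set Implicit Arguments. Unset Strict Implicit. Unset Printing Implicit Defensive.
Import Order.TTheory GRing.Theory Num.Theory.
Local Open Scope ring_scope.

Section Defs.
Variable R : realType.
(* X = X(Omega) (complete, norm = X(Omega)-norm), Y = L_t^2(Gamma). *)
Variables (X Y : completeNormedModType R).

(* The norm of X(Omega): ||E||_X^2 = ||E||_{H(curl)}^2 + ||gamma_T E||_{L^2(Gamma)}^2. *)
Definition Xnorm_splits (gT : X -> Y) : Prop :=
  exists nHcurl : X -> R, forall E, `|E| ^+ 2 = nHcurl E ^+ 2 + `|gT E| ^+ 2.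

(* Boundary pairing  int_Gamma f . gamma_T(conj V) ds  via an abstract
   L^2(Gamma) pairing pY. *)
Definition bdry_pair (pY : Y -> Y -> R[i]) (gT : X -> Y) (f : Y) (V : X) : R[i] :=
  pY f (gT V).

Definition solves_linear (Al : X -> X -> R[i]) (F : X -> R[i])
  (pY : Y -> Y -> R[i]) (gT : X -> Y) (f : Y) (E : X) : Prop :=
  forall V : X, Al E V = F V + bdry_pair pY gT f V.

Definition linear_wellposed (Al : X -> X -> R[i]) (F : X -> R[i])
  (pY : Y -> Y -> R[i]) (gT : X -> Y) (Ctr : R) : Prop :=
  (forall f : Y, exists! E : X, solves_linear Al F pY gT f E) /\
  (forall (f1 f2 : Y) (E1 E2 : X),
      solves_linear Al F pY gT f1 E1 -> solves_linear Al F pY gT f2 E2 ->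
      `|E1 - E2| <= Ctr * `|f1 - f2|).

(* Nonlinear form A^tr(E;V) = <A_l E, V> - int_Gamma g(., gamma_T E) . gamma_T(conj V) ds,
   with G the Nemytskii operator of g. *)
Definition A_tr (Al : X -> X -> R[i]) (pY : Y -> Y -> R[i]) (gT : X -> Y)
  (G : Y -> Y) (E V : X) : R[i] :=
  Al E V - bdry_pair pY gT (G (gT E)) V.

Definition lipschitz_with (G : Y -> Y) (Lg : R) : Prop :=
  forall z1 z2 : Y, `|G z1 - G z2| <= Lg * `|z1 - z2|.

End Defs.

(* Main.v *)
Require Import Defs.
From HB Require Import structures.
From mathcomp Require Import all_boot all_order all_algebra.
From mathcomp Require Import all_classical all_reals all_analysis.
From mathcomp.real_closed Require Import complex.
Import numFieldNormedType.Exports.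
Import Order.TTheory GRing.Theory Num.Theory.
Local Open Scope ring_scope.

Section FP.
Context {R : realType} {X : completeNormedModType R}.
Variables (T : X -> X) (q : R).
Hypothesis q0 : 0 <= q.
Hypothesis q1 : q < 1.
Hypothesis HT : forall x y, `|T x - T y| <= q * `|x - y|.
Definition Tf := T.
HB.instance Definition _ := isFun.Build X X setT setT Tf (fun _ _ => I).

Lemma my_fixed_point : exists x, x = T x.
Proof.
have ctr : is_contraction (Tf : {fun [set: X] >-> [set: X]}).
  exists (NngNum q0); split => //.
  case=> x y /= _; exact: HT.
have [p _ hp] := banach_fixed_point ctr closedT (ex_intro _ 0 I).
by exists p.
Qed.

Lemma my_fixed_unique x y : x = T x -> y = T y -> x = y.
Proof.
move=> hx hy; apply/subr0_eq/normr0_eq0.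
have H : `|x - y| <= q * `|x - y| by rewrite {1}hx {1}hy; exact: HT.
have n0 := normr_ge0 (x - y).
apply: le_anti; rewrite n0 andbT.
have : (1 - q) * `|x - y| <= 0 by rewrite mulrBl mul1r subr_le0.
by rewrite pmulr_rle0 // subr_gt0.
Qed.
End FP.

Theorem corollary2p4 (R : realType) (X Y : completeNormedModType R)
  (gT : X -> Y) (Al : X -> X -> R[i]) (F : X -> R[i]) (pY : Y -> Y -> R[i])
  (G : Y -> Y) (Ctr Lg : R) :
  (forall E1 E2 : X, gT (E1 - E2) = gT E1 - gT E2) ->
  Xnorm_splits gT ->
  linear_wellposed Al F pY gT Ctr ->
  lipschitz_with G Lg ->
  Ctr * Lg < 1 ->
  exists! E : X, forall V : X, A_tr Al pY gT G E V = F V.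
Proof.
move=> lin [nH hn] [ex stab] lipG hq.
have gTle x : `|gT x| <= `|x|.
  have : `|gT x| ^+ 2 <= `|x| ^+ 2 by rewrite hn lerDr sqr_ge0.
  by rewrite ler_sqr ?nnegrE.
pose T E := sval (cid (ex (G (gT E)))).
have TS E : solves_linear Al F pY gT (G (gT E)) (T E).
  by rewrite /T; case: (cid _) => y [].
have equiv E : (forall V, A_tr Al pY gT G E V = F V) <->
               solves_linear Al F pY gT (G (gT E)) E.
  split=> h V; have := h V; rewrite /A_tr.
    by move=> <-; rewrite subrK.
  by move=> ->; rewrite addrK.
pose q := Num.max (Ctr * Lg) 0.
have q0 : 0 <= q by rewrite le_max lexx orbT.
have q1 : q < 1 by rewrite gt_max hq ltr01.
have HT x y : `|T x - T y| <= q * `|x - y|.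
  have h1 := stab _ _ _ _ (TS x) (TS y).
  have h2 := lipG (gT x) (gT y).
  have h3 : `|gT x - gT y| <= `|x - y| by rewrite -lin.
  have n1 := normr_ge0 (gT x - gT y).
  have n2 := normr_ge0 (x - y).
  have n3 := normr_ge0 (G (gT x) - G (gT y)).
  have hq1 : Ctr * Lg <= q by rewrite le_max lexx.
  apply: (le_trans h1).
  have [C0|C0] := leP 0 Ctr.
    apply: (le_trans (ler_wpM2l C0 h2)); rewrite mulrA.
    have [L0|L0] := leP 0 Lg.
      apply: (le_trans (ler_wpM2l (mulr_ge0 C0 L0) h3)).
      by apply: ler_wpM2r.
    apply: (@le_trans _ _ 0); last exact: mulr_ge0.
    by rewrite mulr_le0_ge0 // mulr_ge0_le0 // ltW.
  apply: (@le_trans _ _ 0); last exact: mulr_ge0.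
  by rewrite mulr_le0_ge0 // ltW.
have [p hp] := @my_fixed_point _ _ T q q0 q1 HT.
exists p; split.
  by apply/equiv; rewrite {2}hp; exact: TS.
move=> E /equiv hE.
apply: (@my_fixed_unique _ _ T q q1 HT p E hp).
have [y [_ uy]] := ex (G (gT E)).
exact: (etrans (esym (uy _ hE)) (uy _ (TS E))).
Qed.
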